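(* Let $X$ be a real Banach space and $A:X\rightrightarrows X^*$ maximal monotone with $\mathcal{F}_A=\{F_A\}$. Then for every $w\in\mathrm{dom}(A)$, $v^*\in\mathrm{Im}(A)$, $x\in X$ and $x^*\in X^*$: (i) $F_A(x,v^* )=g_{A,v^*}^*(x)=P_A(x,v^* )$; (ii) $F_A(w,x^* )=f_{A,w}^*(x^* )=P_A(w,x^* )$.
   Context: A representative function of $A$ is a proper convex lsc $h$ on $X\times X^*$ with $h(x,x^* )\ge\langle x,x^*\rangle$ everywhere and equality on $\mathrm{Gr}(A)$; $\mathcal{F}_A$ is the set of all of them. $F_A(x,x^* )=\sup_{(y,y^* )\in\mathrm{Gr}(A)}\{\langle y,x^*\rangle+\langle x,y^*\rangle-\langle y,y^*\rangle\}$. With $\phi(x,x^* )=\langle x,x^*\rangle$ on $\mathrm{Gr}(A)$ and $+\infty$ elsewhere, $P_A$ is the restriction to $X\times X^*$ of $\phi^{**}$. $f_{A,w}(x)=\inf_{a^*\in X^*}\{P_A(x,a^* )-\langle w,a^*\rangle\}$, $g_{A,v^*}(x^* )=\inf_{a\in X}\{P_A(a,x^* )-\langle a,v^*\rangle\}$, with conjugates $f_{A,w}^*(x^* )=\sup_{y\in X}\{\langle y,x^*\rangle-f_{A,w}(y)\}$ and $g_{A,v^*}^*(x)=\sup_{y^*\in X^*}\{\langle x,y^*\rangle-g_{A,v^*}(y^* )\}$. *)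

(* Defs.v *)
From HB Require Import structures.
From mathcomp Require Import all_boot all_order all_algebra.
From mathcomp Require Import all_classical all_reals all_analysis.
Set Implicit Arguments. Unset Strict Implicit. Unset Printing Implicit Defensive.
Import Order.TTheory GRing.Theory Num.Theory.
Local Open Scope classical_set_scope.
Local Open Scope ring_scope.

Section MonotoneDefs.
Context {R : realType} {X : normedModType R}.

(* Xdual : bounded (= continuous) linear functionals on X, as functions X -> R *)
Definition is_dual (f : X -> R) : Prop :=
  (forall (a : R) (x y : X), f (a *: x + y) = a * f x + f y) /\
  exists C : R, forall x : X, `|f x| <= C * `|x|.

Definition dual_norm (f : X -> R) : R :=
  sup [set `|f x| | x in [set x : X | `|x| <= 1]].

Definition is_bidual (F : (X -> R) -> R) : Prop :=
  (forall (a : R) (f g : X -> R), is_dual f -> is_dual g ->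
      F (fun z => a * f z + g z) = a * F f + F g) /\
  exists C : R, forall f, is_dual f -> `|F f| <= C * dual_norm f.

(* a multivalued operator A : X ==> Xdual, given by its graph: A x xs <-> xs \in A x *)
Definition is_multi (A : X -> set (X -> R)) : Prop :=
  forall x, A x `<=` is_dual.

Definition monotone_op (A : X -> set (X -> R)) : Prop :=
  forall x y xs ys, A x xs -> A y ys -> 0 <= xs x - xs y - ys x + ys y.

Definition maximal_monotone (A : X -> set (X -> R)) : Prop :=
  [/\ is_multi A, monotone_op A &
    forall B : X -> set (X -> R), is_multi B -> monotone_op B ->
      (forall x xs, A x xs -> B x xs) -> forall x xs, B x xs -> A x xs].

Definition graph (A : X -> set (X -> R)) : set (X * (X -> R)) :=
  [set p | A p.1 p.2].

Definition fitzpatrick (A : X -> set (X -> R)) (x : X) (xs : X -> R) : \bar R :=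
  ereal_sup [set (p.2 x + xs p.1 - p.2 p.1)%:E | p in graph A].

Definition phiA (A : X -> set (X -> R)) (x : X) (xs : X -> R) : \bar R :=
  if `[< A x xs >] then (xs x)%:E else +oo%E.

Definition conjXXs (h : X -> (X -> R) -> \bar R) (ys : X -> R) (yss : (X -> R) -> R)
  : \bar R :=
  ereal_sup [set ((ys p.1 + yss p.2)%:E - h p.1 p.2)%E
            | p in [set p : X * (X -> R) | is_dual p.2]].

(* P_A : restriction to X x dual (canonically embedded in bidual x tridual) of the biconjugate of phiA *)
Definition P_A (A : X -> set (X -> R)) (x : X) (xs : X -> R) : \bar R :=
  ereal_sup [set ((p.1 x + p.2 xs)%:E - conjXXs (phiA A) p.1 p.2)%E
            | p in [set p : (X -> R) * ((X -> R) -> R) | is_dual p.1 /\ is_bidual p.2]].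

Definition f_Aw (A : X -> set (X -> R)) (w : X) (x : X) : \bar R :=
  ereal_inf [set (P_A A x a - (a w)%:E)%E | a in is_dual].

Definition g_Avs (A : X -> set (X -> R)) (vs : X -> R) (xs : X -> R) : \bar R :=
  ereal_inf [set (P_A A a xs - (vs a)%:E)%E | a in [set: X]].

Definition f_Aw_conj (A : X -> set (X -> R)) (w : X) (xs : X -> R) : \bar R :=
  ereal_sup [set ((xs y)%:E - f_Aw A w y)%E | y in [set: X]].

Definition g_Avs_conj (A : X -> set (X -> R)) (vs : X -> R) (x : X) : \bar R :=
  ereal_sup [set ((ys x)%:E - g_Avs A vs ys)%E | ys in is_dual].

Definition proper_fun (h : X -> (X -> R) -> \bar R) : Prop :=
  (forall x xs, is_dual xs -> h x xs != -oo%E) /\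
  (exists x xs, is_dual xs /\ h x xs != +oo%E).

Definition convex_fun (h : X -> (X -> R) -> \bar R) : Prop :=
  forall (x y : X) (xs ys : X -> R) (l : R), is_dual xs -> is_dual ys -> 0 < l < 1 ->
    let u := (l *: x + (1 - l) *: y)%R in
    let us := (fun z => l * xs z + (1 - l) * ys z)%R in
    (h u us <= l%:E * h x xs + (1 - l)%:E * h y ys)%E.

Definition lsc_fun (h : X -> (X -> R) -> \bar R) : Prop :=
  forall x xs, is_dual xs -> forall t : R, (t%:E < h x xs)%E ->
    exists2 d : R, 0 < d & forall y ys, is_dual ys -> `|y - x| < d ->
      dual_norm (fun z => ys z - xs z) < d -> (t%:E < h y ys)%E.

Definition representative (A : X -> set (X -> R)) (h : X -> (X -> R) -> \bar R) : Prop :=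
  [/\ proper_fun h, convex_fun h, lsc_fun h,
      (forall x xs, is_dual xs -> ((xs x)%:E <= h x xs)%E) &
      (forall x xs, A x xs -> h x xs = (xs x)%:E)].

(* F_A = {F_A}: the set of representative functions is exactly {F_A}
   (functions compared on X x Xdual) *)
Definition unique_representative (A : X -> set (X -> R)) : Prop :=
  representative A (fitzpatrick A) /\
  forall h, representative A h -> forall x xs, is_dual xs -> h x xs = fitzpatrick A x xs.

End MonotoneDefs.

(* Main.v *)
Require Import Defs.
From mathcomp Require Import all_boot all_order all_algebra.
From mathcomp Require Import all_classical all_reals all_analysis.
From mathcomp Require Import ring lra.
Import Order.TTheory GRing.Theory Num.Theory.
Local Open Scope classical_set_scope.
Local Open Scope ring_scope.

Set Implicit Arguments. Unset Strict Implicit. Unset Printing Implicit Defensive.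
Section S.
Context {R : realType} {X : normedModType R}.

Lemma dual0 (f : X -> R) : is_dual f -> f 0 = 0.
Proof.
move=> [L _]; have := L 1 0 0; rewrite scaler0 addr0 mul1r; lra.
Qed.

Lemma dualZ (f : X -> R) a x : is_dual f -> f (a *: x) = a * f x.
Proof. move=> hf; have := hf.1 a x 0; rewrite addr0 (dual0 hf) addr0 //. Qed.

Lemma dualD (f : X -> R) x y : is_dual f -> f (x + y) = f x + f y.
Proof. move=> hf; have := hf.1 1 x y; rewrite scale1r mul1r //. Qed.

Lemma dualB (f : X -> R) x y : is_dual f -> f (x - y) = f x - f y.
Proof. move=> hf; rewrite dualD // -scaleN1r dualZ //; lra. Qed.

Lemma dual_bound (f : X -> R) : is_dual f -> exists C : R, 0 <= C /\ forall x, `|f x| <= C * `|x|.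
Proof.
move=> [_ [C HC]]; exists (Num.max C 0); split; first by rewrite le_max lexx orbT.
move=> x; apply: (le_trans (HC x)); apply: ler_wpM2r => //; by rewrite le_max lexx.
Qed.

Lemma dual_lin2 (f g : X -> R) a b : is_dual f -> is_dual g ->
  is_dual (fun z => a * f z + b * g z).
Proof.
move=> hf hg; split.
  move=> c x y; rewrite !dualD // !dualZ //; ring.
have [Cf [_ Hf]] := dual_bound hf; have [Cg [_ Hg]] := dual_bound hg.
exists (`|a| * Cf + `|b| * Cg) => x.
apply: (le_trans (ler_normD _ _)); rewrite !normrM mulrDl -!mulrA.
apply: lerD; apply: ler_wpM2l => //.
Qed.

Lemma dual_norm_ub (f : X -> R) x : is_dual f -> `|x| <= 1 -> `|f x| <= dual_norm f.
Proof.
move=> hf hx; have [C [C0 HC]] := dual_bound hf.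
apply: ub_le_sup; last by exists x.
exists C => _ [y hy <-]; apply: (le_trans (HC y)).
by rewrite -[leRHS]mulr1 ler_wpM2l.
Qed.

Lemma dual_norm_ge0 (f : X -> R) : is_dual f -> 0 <= dual_norm f.
Proof. move=> hf; apply: le_trans (dual_norm_ub (x := 0) hf _); by rewrite ?normr0. Qed.

Lemma dual_norm_le (f : X -> R) x : is_dual f -> `|f x| <= `|x| * dual_norm f.
Proof.
move=> hf; have [->|x0] := eqVneq x 0.
  by rewrite dual0 // !normr0 mul0r.
have nx : 0 < `|x| by rewrite normr_gt0.
have := dual_norm_ub (x := `|x|^-1 *: x) hf.
rewrite normrZ normfV normr_id mulVf ?gt_eqF // lexx => /(_ isT).
rewrite dualZ // normrM normfV normr_id => H.
by rewrite -ler_pdivrMl // mulrC.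
Qed.

Lemma ev_bidual (a : X) : is_bidual (fun f : X -> R => f a).
Proof.
split => //; exists `|a| => f hf; exact: dual_norm_le.
Qed.

Lemma bidual_lin (F : (X -> R) -> R) f g a b : is_bidual F -> is_dual f -> is_dual g ->
  F (fun z => a * f z + b * g z) = a * F f + b * F g.
Proof.
move=> [L _] hf hg.
have h0 : is_dual (fun _ : X => 0 : R).
  split; [by move=> *; rewrite mulr0 addr0| exists 0 => x; by rewrite normr0 mul0r].
have F0 : F (fun _ => 0) = 0.
  have : F (fun _ => 0) = 1 * F (fun _ => 0) + F (fun _ => 0).
    by rewrite -L //; congr F; apply: funext => z /=; rewrite mulr0 addr0.
  lra.
have FZ : forall c h, is_dual h -> F (fun z => c * h z) = c * F h.
  move=> c h hh; rewrite -[RHS]addr0 -F0 -L //; congr F; apply: funext => z /=; rewrite addr0 //.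
have hbg : is_dual (fun z => b * g z).
  have := dual_lin2 0 b h0 hg.
  by have -> : (fun z : X => 0 * 0 + b * g z) = (fun z => b * g z) by apply: funext => z; rewrite mul0r add0r.
by rewrite L // FZ.
Qed.


Local Open Scope ereal_scope.

Lemma conj_le_F (A : X -> set (X -> R)) ys a :
  conjXXs (phiA A) ys (fun f => f a) <= fitzpatrick A a ys.
Proof.
apply: ge_ereal_sup => _ [[b bs] /= hbs <-]; rewrite /phiA.
case: asboolP => H.
  apply: ereal_sup_ubound; exists (b, bs) => //=.
  by rewrite -EFinB; congr EFin; ring.
by rewrite /= leNye.
Qed.

Lemma keyP (A : X -> set (X -> R)) x xs ys a : is_dual ys ->
  (ys x + xs a)%:E - fitzpatrick A a ys <= P_A A x xs.
Proof.
move=> hys.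
apply: le_trans (_ : (ys x + xs a)%:E - conjXXs (phiA A) ys (fun f => f a) <= _).
  by apply: leeB => //; exact: conj_le_F.
apply: ereal_sup_ubound; exists (ys, fun f => f a) => //; split => //; exact: ev_bidual.
Qed.

Lemma F_le_P (A : X -> set (X -> R)) : is_multi A ->
  (forall x xs, A x xs -> fitzpatrick A x xs = (xs x)%:E) ->
  forall x xs, fitzpatrick A x xs <= P_A A x xs.
Proof.
move=> hm hg x xs; apply: ge_ereal_sup => _ [[b bs] /= hb <-].
by have := keyP A x xs b (hm _ _ hb); rewrite hg.
Qed.

Lemma P_le_phi (A : X -> set (X -> R)) x xs : is_multi A -> A x xs ->
  P_A A x xs <= (xs x)%:E.
Proof.
move=> hm hx; apply: ge_ereal_sup => _ [[ys yss] [hys hyss] <-] /=.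
have H : (ys x + yss xs)%:E - (xs x)%:E <= conjXXs (phiA A) ys yss.
  apply: ereal_sup_ubound; exists (x, xs); first exact: hm hx.
  by rewrite /phiA asboolT.
move: H; case: (conjXXs (phiA A) ys yss) => [c| |] //=; rewrite ?lee_fin.
- move=> H; lra.
- by move=> _; rewrite addeNy leNye.
Qed.

Lemma conj_neq_Ny (A : X -> set (X -> R)) w ws ys yss : is_multi A -> A w ws ->
  conjXXs (phiA A) ys yss != -oo.
Proof.
move=> hm hw.
have H : (ys w + yss ws)%:E - (ws w)%:E <= conjXXs (phiA A) ys yss.
  apply: ereal_sup_ubound; exists (w, ws); first exact: hm hw.
  by rewrite /phiA asboolT.
by apply: contraTN H => /eqP ->; rewrite leeNy_eq.
Qed.


Section Rep.
Variables (A : X -> set (X -> R)) (hm : is_multi A)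
  (hF : representative A (fitzpatrick A)) (w : X) (ws : X -> R) (hw : A w ws).

Lemma pair_le_P x xs : is_dual xs -> (xs x)%:E <= P_A A x xs.
Proof.
move=> hxs; case: hF => _ _ _ h4 h5.
by apply: le_trans (h4 _ _ hxs) _; apply: F_le_P.
Qed.

Lemma P_graph x xs : A x xs -> P_A A x xs = (xs x)%:E.
Proof.
move=> hx; apply/le_anti/andP; split; first exact: P_le_phi.
exact: pair_le_P (hm hx).
Qed.

Lemma P_real_or x xs : is_dual xs -> P_A A x xs = +oo \/ exists r, P_A A x xs = r%:E.
Proof.
move=> hxs; have := pair_le_P x hxs.
case: (P_A A x xs) => [r| |] //; [right; by exists r| by left].
Qed.

Lemma P_convex : convex_fun (P_A A).
Proof.
move=> x y xs ys l hxs hys /andP[l0 l1]; cbv zeta.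
have [Px|[px Px]] := P_real_or x hxs.
  rewrite Px gt0_muley ?lte_fin //.
  have [Py|[py Py]] := P_real_or y hys; rewrite Py.
    by rewrite gt0_muley ?lte_fin ?subr_gt0 // addye // leey.
  by rewrite -EFinM addye // leey.
have [Py|[py Py]] := P_real_or y hys; rewrite Py.
  by rewrite gt0_muley ?lte_fin ?subr_gt0 // Px -EFinM addey // leey.
apply: ge_ereal_sup => _ [[ys' yss] [h1 h2] <-] /=.
have := conj_neq_Ny ys' yss hm hw.
have Hx : (ys' x + yss xs)%:E - conjXXs (phiA A) ys' yss <= px%:E.
  by rewrite -Px; apply: ereal_sup_ubound; exists (ys', yss).
have Hy : (ys' y + yss ys)%:E - conjXXs (phiA A) ys' yss <= py%:E.
  by rewrite -Py; apply: ereal_sup_ubound; exists (ys', yss).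
move: Hx Hy; case: (conjXXs (phiA A) ys' yss) => [c| |] //=; last first.
  by move=> _ _ _; rewrite addeNy leNye.
rewrite Px -!EFinM -!EFinD !lee_fin => Hx Hy _.
rewrite dualD // !dualZ // bidual_lin //.
nra.
Qed.


Lemma P_lsc : lsc_fun (P_A A).
Proof.
move=> x xs hxs t /ereal_sup_gt [_ [[ys' yss] [h1 h2] <-] /= ht].
have := conj_neq_Ny ys' yss hm hw.
have Hsup : forall y ys, is_dual ys ->
    (ys' y + yss ys)%:E - conjXXs (phiA A) ys' yss <= P_A A y ys.
  by move=> y ys hys; apply: ereal_sup_ubound; exists (ys', yss).
move: ht Hsup; case: (conjXXs (phiA A) ys' yss) => [c| |] //=.
rewrite -EFinD lte_fin => ht Hsup _; move: h1 h2 => /= h1 h2.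
have [C1 [C10 HC1]] := dual_bound h1.
have [C2 HC2] := h2.2.
pose e := (ys' x + yss xs - c - t)%R.
have e0 : (0 < e)%R by rewrite /e; lra.
pose K := (C1 + `|C2| + 1)%R.
have K0 : (0 < K)%R by rewrite /K; have := normr_ge0 C2; lra.
pose d := (e / (2 * K))%R.
have d0 : (0 < d)%R by rewrite /d divr_gt0 // mulr_gt0.
have dK : (K * d = e / 2)%R.
  by rewrite /d; field; rewrite gt_eqF.
exists d => // y ys hys hy hd.
apply: lt_le_trans (Hsup y ys hys); rewrite -EFinD lte_fin.
have hdiff : is_dual (fun z => ys z - xs z)%R.
  have := dual_lin2 1 (-1) hys hxs.
  by have -> : (fun z => 1 * ys z + -1 * xs z)%R = (fun z => ys z - xs z)%R
    by apply: funext => z; ring.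
have E1 : yss (fun z => ys z - xs z)%R = (yss ys - yss xs)%R.
  have -> : (fun z => ys z - xs z)%R = (fun z => 1 * ys z + -1 * xs z)%R
    by apply: funext => z; ring.
  by rewrite bidual_lin //; ring.
have E2 : ys' (y - x)%R = (ys' y - ys' x)%R by rewrite dualB.
have B1 : (`|ys' (y - x)%R| <= C1 * d)%R.
  apply: le_trans (HC1 _) _; apply: ler_wpM2l => //; exact: ltW.
have B2 : (`|yss (fun z => ys z - xs z)%R| <= `|C2| * d)%R.
  apply: le_trans (HC2 _ hdiff) _.
  apply: le_trans (_ : (`|C2| * dual_norm (fun z => ys z - xs z)%R <= _)%R).
    apply: ler_wpM2r; [exact: dual_norm_ge0 | exact: ler_norm].
  apply: ler_wpM2l => //; exact: ltW.
have B3 : (C1 * d + `|C2| * d <= e / 2)%R.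
  rewrite -dK -mulrDl; apply: ler_wpM2r; [exact: ltW| rewrite /K; lra].
move: B1 B2; rewrite !ler_norml E1 E2 => /andP[B1 _] /andP[B2 _].
rewrite /e in B3; lra.
Qed.

Lemma P_rep : representative A (P_A A).
Proof.
split.
- split; first by move=> x xs hxs; apply: contraTN (pair_le_P x hxs) => /eqP ->; rewrite leeNy_eq.
  by exists w, ws; split; [exact: hm hw| rewrite P_graph].
- exact: P_convex.
- exact: P_lsc.
- by move=> x xs hxs; exact: pair_le_P.
- by move=> x xs hx; exact: P_graph.
Qed.

End Rep.


Lemma gconj_eq (A : X -> set (X -> R)) (hm : is_multi A)
  (hF : representative A (fitzpatrick A)) w ws (hw : A w ws)
  (PF : forall y ys, is_dual ys -> P_A A y ys = fitzpatrick A y ys) x vs :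
  is_dual vs -> g_Avs_conj A vs x = P_A A x vs.
Proof.
move=> hvs; apply/le_anti/andP; split.
  apply: ge_ereal_sup => _ [ys hys <-].
  have [Px|[p Px]] := P_real_or hm hF x hvs; first by rewrite Px leey.
  have Hg : (ys x - p)%:E <= g_Avs A vs ys.
    apply: le_ereal_inf_tmp => _ [a _ <-].
    have [Pa|[q Pa]] := P_real_or hm hF a hys; first by rewrite Pa addye // leey.
    have K := keyP A x vs a hys; rewrite -PF // Pa Px in K.
    rewrite Pa -EFinB lee_fin; rewrite -EFinB lee_fin in K; lra.
  move: Hg; case: (g_Avs A vs ys) => [r| |] //=.
  - by rewrite Px -EFinB !lee_fin => H; lra.
  - by rewrite addeNy leNye.
rewrite PF //; apply: ge_ereal_sup => _ [[b bs] /= hb <-].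
have hbs := hm _ _ hb.
apply: le_trans (_ : (bs x)%:E - g_Avs A vs bs <= _); last first.
  by apply: ereal_sup_ubound; exists bs.
have : g_Avs A vs bs <= (bs b - vs b)%:E.
  apply: ge_ereal_inf; exists (P_A A b bs - (vs b)%:E); first by exists b.
  by rewrite (P_graph hm hF hb) EFinB.
move=> H; apply: le_trans (leeB (lexx (bs x)%:E) H); rewrite -EFinB lee_fin; lra.
Qed.

Lemma fconj_eq (A : X -> set (X -> R)) (hm : is_multi A)
  (hF : representative A (fitzpatrick A)) w ws (hw : A w ws)
  (PF : forall y ys, is_dual ys -> P_A A y ys = fitzpatrick A y ys) xs :
  is_dual xs -> f_Aw_conj A w xs = P_A A w xs.
Proof.
move=> hxs; apply/le_anti/andP; split.
  apply: ge_ereal_sup => _ [y _ <-].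
  have [Px|[p Px]] := P_real_or hm hF w hxs; first by rewrite Px leey.
  have Hg : (xs y - p)%:E <= f_Aw A w y.
    apply: le_ereal_inf_tmp => _ [a ha <-].
    have [Pa|[q Pa]] := P_real_or hm hF y ha; first by rewrite Pa addye // leey.
    have K := keyP A w xs y ha; rewrite -PF // Pa Px in K.
    rewrite Pa -EFinB lee_fin; rewrite -EFinB lee_fin in K; lra.
  move: Hg; case: (f_Aw A w y) => [r| |] //=.
  - by rewrite Px -EFinB !lee_fin => H; lra.
  - by rewrite addeNy leNye.
rewrite PF //; apply: ge_ereal_sup => _ [[b bs] /= hb <-].
have hbs := hm _ _ hb.
apply: le_trans (_ : (xs b)%:E - f_Aw A w b <= _); last first.
  by apply: ereal_sup_ubound; exists b.
have : f_Aw A w b <= (bs b - bs w)%:E.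
  apply: ge_ereal_inf; exists (P_A A b bs - (bs w)%:E); first by exists bs.
  by rewrite (P_graph hm hF hb) EFinB.
move=> H; apply: le_trans (leeB (lexx (xs b)%:E) H); rewrite -EFinB lee_fin; lra.
Qed.

End S.

Unset Implicit Arguments.

Theorem corollary3p5 (R : realType) (X : completeNormedModType R)
  (A : X -> set (X -> R)) :
  maximal_monotone A -> unique_representative A ->
  forall (w : X) (vs : X -> R) (x : X) (xs : X -> R),
    (exists ws, A w ws) -> (exists u, A u vs) -> is_dual xs ->
    (fitzpatrick A x vs = g_Avs_conj A vs x /\ g_Avs_conj A vs x = P_A A x vs) /\
    (fitzpatrick A w xs = f_Aw_conj A w xs /\ f_Aw_conj A w xs = P_A A w xs).
Proof.
move=> [hm _ _] [hF huniq] w vs x xs [ws hw] [u hu] hxs.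
have hvs := hm _ _ hu.
have PF : forall y ys, is_dual ys -> P_A A y ys = fitzpatrick A y ys.
  by move=> y ys hys; exact: (huniq _ (P_rep hm hF hw)).
rewrite (gconj_eq hm hF hw PF x hvs) (fconj_eq hm hF hw PF hxs) -!PF //.
Qed.
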